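(* Let $G$ be an equilibrium graph of a bounded budget network creation game $(b_1,\dots,b_n)$-BG in the SUM version. Let $C$ be a subset of the vertices of $G$ and let $A$ be the vertex set of a connected component of $U(G-C)$, where $G-C$ is the subgraph induced by $V(G)\setminus C$. Assume that for every $v\in A$ we have $\operatorname{dist}(v,C)=1$ and the budget of $v$ is larger than $|C|$. Then every vertex in $A$ has local diameter at most $2$.
   Context: Bounded budget network creation game $(b_1,\dots,b_n)$-BG: $n$ players with integer budgets $0\le b_i\le n-1$. A strategy of player $i$ is a set $S_i\subseteq\{1,\dots,n\}\setminus\{i\}$ with $|S_i|=b_i$; a profile is realized by the directed graph $G$ on $u_1,\dots,u_n$ with an arc $\overrightarrow{u_iu_j}$ iff $j\in S_i$; the budget of vertex $u_i$ is $b_i$. $U(G)$ is the undirected multigraph obtained by ignoring directions. $\operatorname{dist}(u,v)$ is the distance in $U(G)$, defined as $n^2$ between different components; $\operatorname{dist}(u,C)=\min_{c\in C}\operatorname{dist}(u,c)$. The local diameter of $u$ is $\max_v\operatorname{dist}(u,v)$. SUM cost: $c_{SUM}(u)=\sum_v\operatorname{dist}(u,v)$. An equilibrium graph in the SUM version is a realization in which no vertex can decrease its SUM cost by changing its own strategy while the others are fixed. *)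

(* Defs.v *)
From mathcomp Require Import all_boot.
Set Implicit Arguments. Unset Strict Implicit. Unset Printing Implicit Defensive.

Section BBG.
Variable n : nat.
Notation V := 'I_n.

Definition strategy (b : V -> nat) (i : V) (T : {set V}) : bool :=
  (i \notin T) && (#|T| == b i).

(* A strategy profile: one strategy per player; it is realized by the digraph
   with an arc u_i -> u_j iff j \in S i. *)
Definition profile (b : V -> nat) (S : V -> {set V}) : Prop :=
  forall i, strategy b i (S i).

Definition adjU (S : V -> {set V}) : rel V :=
  fun u v => (v \in S u) || (u \in S v).

Fixpoint ball (S : V -> {set V}) (k : nat) (u : V) : {set V} :=
  match k with
  | 0 => [set u]
  | k'.+1 => ball S k' u :|: [set y | [exists x in ball S k' u, adjU S x y]]
  end.

(* distance in U(G); n^2 between different components.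
   (Any shortest path has fewer than n edges.) *)
Definition dist (S : V -> {set V}) (u v : V) : nat :=
  \big[minn/n ^ 2]_(k < n | v \in ball S k u) (k : nat).

Definition distSet (S : V -> {set V}) (u : V) (C : {set V}) : nat :=
  \big[minn/n ^ 2]_(c in C) dist S u c.

Definition local_diam (S : V -> {set V}) (u : V) : nat :=
  \max_(v : V) dist S u v.

Definition cost_sum (S : V -> {set V}) (u : V) : nat :=
  \sum_(v : V) dist S u v.

Definition deviate (S : V -> {set V}) (i : V) (T : {set V}) : V -> {set V} :=
  fun j => if j == i then T else S j.

Definition sum_equilibrium (b : V -> nat) (S : V -> {set V}) : Prop :=
  profile b S /\
  forall (i : V) (T : {set V}), strategy b i T ->
    cost_sum S i <= cost_sum (deviate S i T) i.

Definition adjU_minus (S : V -> {set V}) (C : {set V}) : rel V :=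
  fun u v => [&& u \notin C, v \notin C & adjU S u v].

Definition is_component_minus (S : V -> {set V}) (C A : {set V}) : Prop :=
  exists2 x : V, x \notin C & A = [set y | connect (adjU_minus S C) x y].

End BBG.

(* Main.v *)
Require Import Defs.
From mathcomp Require Import all_boot.
From mathcomp Require Import zify.
Set Implicit Arguments. Unset Strict Implicit. Unset Printing Implicit Defensive.

Section H.
Variable n : nat.
Notation V := 'I_n.
Implicit Types (S : V -> {set V}).

Lemma bigmin_le (I : eqType) (r : seq I) (P : pred I) F m j :
  j \in r -> P j -> \big[minn/m]_(i <- r | P i) F i <= F j.
Proof.
elim: r => // a r IH; rewrite inE big_cons => /orP [/eqP <- -> | jr Pj].
  exact: geq_minl.
case: (P a); last exact: IH.
by rewrite geq_min IH ?orbT.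
Qed.

Lemma bigmin_mem (I : Type) (r : seq I) (P : pred I) F m :
  \big[minn/m]_(i <- r | P i) F i = m \/
  exists j, P j /\ \big[minn/m]_(i <- r | P i) F i = F j.
Proof.
apply: (big_ind (fun x => x = m \/ exists j, P j /\ x = F j)).
- by left.
- move=> x y Hx Hy; rewrite /minn; case: ifP => _; by [].
- by move=> i Pi; right; exists i.
Qed.

Lemma bigmin_ge (I : Type) (r : seq I) (P : pred I) F m L :
  L <= m -> (forall i, P i -> L <= F i) -> L <= \big[minn/m]_(i <- r | P i) F i.
Proof.
move=> Hm HF; apply: (big_ind (fun x => L <= x)) => // x y Hx Hy.
by rewrite leq_min Hx Hy.
Qed.

Lemma dist_le S u y k : k < n -> y \in ball S k u -> dist S u y <= k.
Proof.
move=> Hk Hy; rewrite /dist.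
exact: (@bigmin_le _ _ _ (fun i : 'I_n => (i : nat)) _ (Ordinal Hk)
   (mem_index_enum _) Hy).
Qed.

Lemma dist_ub S u y : dist S u y <= n ^ 2.
Proof. rewrite /dist; apply: (big_ind (fun x => x <= n ^ 2)).
- by [].
- move=> x y' Hx Hy; exact: leq_trans (geq_minl _ _) Hx.
- move=> i _; have := ltn_ord i; nia.
Qed.

Lemma dist_ball S u y : dist S u y < n ^ 2 ->
  dist S u y < n /\ y \in ball S (dist S u y) u.
Proof.
have [E|[j [Pj E]]] := bigmin_mem (index_enum 'I_n)
   (fun k : 'I_n => y \in ball S k u) (fun k : 'I_n => (k : nat)) (n ^ 2).
  by rewrite /dist E ltnn.
by rewrite /dist E => _; split.
Qed.

Lemma dist_ge S u y L : L <= n ^ 2 -> (forall k, k < L -> y \notin ball S k u) ->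
  L <= dist S u y.
Proof.
move=> HL Hk; rewrite /dist; apply: bigmin_ge => // i Hi.
by rewrite leqNgt; apply/negP => /Hk; rewrite Hi.
Qed.

Lemma ball_mono S k u : ball S k u \subset ball S k.+1 u.
Proof. by rewrite /= subsetUl. Qed.

Lemma ball_le S j k u : j <= k -> ball S j u \subset ball S k u.
Proof.
elim: k => [|k IH]; first by rewrite leqn0 => /eqP ->.
rewrite leq_eqVlt => /orP [/eqP -> // | ].
rewrite ltnS => /IH H; exact: subset_trans H (ball_mono _ _ _).
Qed.

Lemma ballS S k u y : (y \in ball S k.+1 u) =
   (y \in ball S k u) || [exists x in ball S k u, adjU S x y].
Proof. by rewrite /= in_setU in_set. Qed.

Lemma ball0 S u y : (y \in ball S 0 u) = (y == u).
Proof. by rewrite /= in_set1. Qed.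

Lemma ball1 S u y : y \in ball S 1 u -> y = u \/ adjU S u y.
Proof.
rewrite ballS ball0 => /orP [/eqP ->|/existsP [x /andP [Hx Ha]]]; first by left.
by move: Hx; rewrite ball0 => /eqP <-; right.
Qed.

Lemma ball1_adj S u y : adjU S u y -> y \in ball S 1 u.
Proof. by move=> H; rewrite ballS; apply/orP; right; apply/existsP; exists u; rewrite ball0 eqxx. Qed.

Lemma ball2_adj S u x y : adjU S u x -> adjU S x y -> y \in ball S 2 u.
Proof.
by move=> H1 H2; rewrite ballS; apply/orP; right; apply/existsP; exists x; rewrite ball1_adj.
Qed.

Lemma adjU_sym S x y : adjU S x y = adjU S y x.
Proof. by rewrite /adjU orbC. Qed.

End H.

Set Implicit Arguments. Unset Strict Implicit.

Lemma arW a b c : a <= 1 -> 2 < b -> a + (1 + 1) <= b + c.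
Proof. lia. Qed.
Lemma arC (a b : nat) (g : bool) : a <= 1 -> (g -> 2 <= b) -> 1 <= b -> a + (g + false) <= b + false.
Proof. case: g => /=; [move=> h1 /(_ isT) | ]; lia. Qed.
Lemma arD a b : a <= 2 -> 1 <= b -> a + (false + false) <= b + true.
Proof. simpl; lia. Qed.
Lemma arO a b : a <= b -> a + (false + false) <= b + false.
Proof. simpl; lia. Qed.
Lemma arEq d : d < 2 -> 1 <= d -> d = 1.
Proof. lia. Qed.
Lemma arN d n : d < 2 -> 2 < n -> d < n ^ 2.
Proof. nia. Qed.
Lemma arF a b e : b <= a -> a + (e + 1) <= b + e -> False.
Proof. lia. Qed.
Lemma arN2 n : 2 < n -> 2 <= n ^ 2.
Proof. nia. Qed.

Unset Implicit Arguments. Set Strict Implicit.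

Theorem mainTheorem19 (n : nat) (b : 'I_n -> nat) (S : 'I_n -> {set 'I_n})
  (C A : {set 'I_n}) :
  (forall i, b i <= n.-1) ->
  sum_equilibrium b S ->
  is_component_minus S C A ->
  (forall v, v \in A -> distSet S v C = 1) ->
  (forall v, v \in A -> #|C| < b v) ->
  forall v, v \in A -> local_diam S v <= 2.
Proof.
move=> _ [Hprof Heq] [x0 Hx0 HA] HdC HbC v Hv.
rewrite /local_diam; apply/bigmax_leqP => w _.
rewrite leqNgt; apply/negP => Hw.
have n0 : 0 < n := leq_ltn_trans (leq0n v) (ltn_ord v).
have notAC : forall y, y \in A -> y \notin C.
  move=> y; rewrite HA inE => /connectP [p Hp ->].
  move: (x0) Hx0 Hp; elim: p => [//|z p IH] x Hx /= /andP [Hxz Hp].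
  by apply: IH Hp; move: Hxz; rewrite /adjU_minus => /and3P [].
have compA : forall x y, x \in A -> y \notin C -> adjU S x y -> y \in A.
  move=> x y Hx Hy Hxy; have HxC := notAC _ Hx; move: Hx; rewrite HA !inE => Hx.
  apply: connect_trans Hx (connect1 _).
  by rewrite /adjU_minus Hy Hxy HxC.
have dvv : forall S' (u : 'I_n), dist S' u u = 0.
  by move=> S' u; apply/eqP; rewrite -leqn0; apply: dist_le => //; rewrite ball0.
have wv : w != v by apply/eqP => E; move: Hw; rewrite E dvv.
have n2 : 1 < n.
  have := ltn_ord v; have := ltn_ord w; move: wv; rewrite -val_eqE /=; lia.
have adjC : forall x, x \in A -> exists2 c, c \in C & adjU S x c.
  move=> x Hx; have := HdC x Hx; rewrite /distSet.
  have [->|[c [Hc ->]] E] := bigmin_mem (index_enum 'I_n) (fun c => c \in C) (fun c => dist S x c) (n ^ 2).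
    by nia.
  exists c => //.
  have [_] := dist_ball (y := c) (u := x) (S := S) ltac:(rewrite E; nia).
  rewrite E => /ball1 [E'|//]; by move: Hc; rewrite E' (negbTE (notAC _ Hx)).
have [c0 Hc0 Hvc0] := adjC v Hv.
have dge1 : forall S' x, x != v -> 1 <= dist S' v x.
  move=> S' x xv; apply: dist_ge; first by nia.
  by move=> [|k] // _; rewrite ball0.
have dvc0 : dist S v c0 <= 1 := dist_le n2 (ball1_adj Hvc0).
have n3 : 2 < n.
  have c0v : c0 != v by apply: contraTneq Hc0 => ->; rewrite notAC.
  have c0w : c0 != w by apply: contraTneq dvc0 => ->; rewrite -ltnNge ltnW.
  have := ltn_ord v; have := ltn_ord w; have := ltn_ord c0.
  move: wv c0v c0w; rewrite -!val_eqE /=; lia.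
have nadj : ~~ adjU S v w.
  by apply/negP => /ball1_adj /(dist_le n2); rewrite leqNgt ltnW.
move: nadj; rewrite /adjU negb_or => /andP [wSv vSw].
have [vSv /eqP cardSv] := andP (Hprof v).
set Cpp := [set c in C | (v \notin S c) && (c \notin S v)].
set E := w |: Cpp.
set X := S v :\: C.
have XA : forall x, x \in X -> x \in A.
  move=> x; rewrite inE => /andP [HxC HxS]; apply: compA Hv HxC _.
  by rewrite /adjU HxS.
have cardE : #|E| <= #|X|.
  have h1 : #|E| <= #|Cpp|.+1 by rewrite cardsU1; case: (w \in Cpp).
  have h2 : #|Cpp| <= #|C :\: S v|.
    apply: subset_leq_card; apply/subsetP => x; rewrite !inE.
    by case/andP => -> /andP [_ ->].
  have h3 := HbC v Hv.
  have h4 : #|C :&: S v| <= #|C| by apply: subset_leq_card; apply: subsetIl.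
  move: h1 h2 h3 h4; rewrite /X !cardsD cardSv setIC; lia.
have [s [us ss subs]] := card_geqP cardE.
set D := [set x in s].
have cardD : #|D| = #|E| by rewrite cardsE -ss; apply/card_uniqP.
have DX : forall x, x \in D -> x \in X by move=> x; rewrite inE => /subs.
have DS : D \subset S v by apply/subsetP => x /DX; rewrite inE => /andP [].
set T := (S v :\: D) :|: E.
have HT : strategy b v T.
  apply/andP; split.
    by rewrite /T /E /Cpp !inE (negbTE vSv) (negbTE (notAC _ Hv)) andbF /= orbF eq_sym.
  have I0 : (S v :\: D) :&: E = set0.
    apply/setP => x; rewrite !inE.
    case: (eqVneq x w) => [->|_]; first by rewrite (negbTE wSv) andbF.
    by case: (x \in S v); rewrite ?andbF.
  rewrite cardsU I0 cards0 cardsD (setIidPr DS) cardD.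
  apply/eqP; have := subset_leq_card DS; rewrite cardD cardSv.
  by move=> h; rewrite subn0 subnK.
have Hcost := Heq v T HT.
set S' := deviate S v T.
have HS'v : S' v = T by rewrite /S' /deviate eqxx.
have HS'x : forall x, x != v -> S' x = S x.
  by move=> x xv; rewrite /S' /deviate (negbTE xv).
have adj_keep : forall x y, x != v -> y != v -> adjU S x y -> adjU S' x y.
  by move=> x y xv yv; rewrite /adjU !HS'x.
have adj_T : forall y, y \in T -> adjU S' v y.
  by move=> y Hy; rewrite /adjU HS'v Hy.
have adj_in : forall y, v \in S y -> y != v -> adjU S' v y.
  by move=> y Hy yv; rewrite /adjU (HS'x y yv) Hy orbT.
have adj_C : forall c, c \in C -> adjU S' v c.
  move=> c Hc; have cv : c != v by apply: contraTneq Hc => ->; rewrite notAC.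
  case Hvc: (v \in S c); first by apply: adj_in.
  apply: adj_T; rewrite !inE Hc Hvc /=.
  case Hcv: (c \in S v); last by rewrite !orbT.
  have -> : c \notin s by apply/negP => /subs; rewrite /X inE Hc.
  by [].
have d2 : forall x, x \in A -> x != v -> dist S' v x <= 2.
  move=> x Hx xv; have [c Hc Hxc] := adjC x Hx.
  have cv : c != v by apply: contraTneq Hc => ->; rewrite notAC.
  apply: dist_le n3 _; apply: ball2_adj (adj_C c Hc) _.
  by rewrite adjU_sym; apply: adj_keep.
have transfer : forall k y, y \in ball S k v -> y \notin A -> y \in ball S' k v.
  elim=> [|k IH] y; first by rewrite ball0 => /eqP ->; rewrite Hv.
  rewrite !ballS => /orP [Hy|/existsP [x /andP [Hx Hxy]]] HyA.
    by rewrite IH.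
  case HxA: (x \in A).
    have HyC : y \in C by apply: contraNT HyA => HyC; apply: compA HxA HyC Hxy.
    move: (ball1_adj (adj_C y HyC)) => H; rewrite -ballS; exact: (subsetP (@ball_le n S' 1 k.+1 v (ltn0Sn k))) _ H.
  apply/orP; right; apply/existsP; exists x; rewrite IH ?HxA //=.
  apply: adj_keep Hxy.
    by apply: contraFneq HxA => ->.
  by apply: contraNneq HyA => ->.
have vC : (v \in C) = false by apply/negbTE/notAC.
have key : forall x, dist S' v x + ((x \in E) + (x == w)) <= dist S v x + (x \in D).
  move=> x.
  case: (eqVneq x v) => [->|xv].
    by rewrite dvv /E /Cpp !inE vC /= (eq_sym v w) (negbTE wv).
  have wE : w \in E by apply: setU11.
  case: (eqVneq x w) => [->|xw].
    have wT : w \in T by apply/setUP; right.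
    have h1 : dist S' v w <= 1 := dist_le n2 (ball1_adj (adj_T w wT)).
    rewrite wE /=; apply: arW h1 Hw.
  case HxC: (x \in C).
    have xD : (x \in D) = false by apply/negbTE/negP => /DX; rewrite inE HxC.
    have xE : (x \in E) = (x \in Cpp) by rewrite /E in_setU1 (negbTE xw).
    have h1 : dist S' v x <= 1 := dist_le n2 (ball1_adj (adj_C x HxC)).
    rewrite xD xE.
    apply: arC h1 _ (dge1 S x xv) => xCpp.
    apply: dist_ge; first exact: arN2.
    move=> [|[|k]] // _; first by rewrite ball0.
    apply/negP => /ball1 [E'|]; first by move: xv; rewrite E' eqxx.
    move: xCpp; rewrite /Cpp inE HxC /= /adjU => /andP [/negbTE -> /negbTE ->].
    done.
  have xE : (x \in E) = false by rewrite /E /Cpp !inE (negbTE xw) HxC.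
  rewrite xE.
  case HxD: (x \in D).
    exact: arD (d2 x (XA x (DX x HxD)) xv) (dge1 S x xv).
  apply: arO.
  case HxA: (x \in A).
    case: (leqP 2 (dist S v x)) => h.
      exact: leq_trans (d2 x HxA xv) h.
    have h1 := dge1 S x xv.
    have [_] := dist_ball (arN h n3).
    rewrite (arEq h h1).
    move/ball1 => [E'|]; first by move: xv; rewrite E' eqxx.
    rewrite /adjU => /orP [HxS|HvS].
      apply: dist_le n2 _; apply: ball1_adj; apply: adj_T.
      by rewrite in_setU in_setD HxD HxS.
    apply: dist_le n2 _; apply: ball1_adj; exact: adj_in.
  case: (ltnP (dist S v x) (n ^ 2)) => h.
    have [hn hb] := dist_ball h.
    apply: dist_le hn _; apply: transfer hb _; by rewrite HxA.
  exact: leq_trans (dist_ub _ _ _) h.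
have Hsum := @leq_sum _ (index_enum 'I_n) xpredT _ _ (fun x _ => key x).
rewrite !big_split /= in Hsum.
have sb : forall P : {set 'I_n}, \sum_(x : 'I_n) (x \in P : nat) = #|P|.
  move=> P; rewrite -sum1_card [RHS]big_mkcond /=; apply: eq_bigr => x _.
  by case: (x \in P).
have sw : \sum_(x : 'I_n) (x == w : nat) = 1.
  by rewrite (bigD1 w) //= eqxx big1 // => x /negbTE ->.
rewrite !sb sw cardD in Hsum.
move: Hcost Hsum; rewrite /cost_sum; exact: arF.
Qed.
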